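(* The function $\Phi(\alpha,\beta)=\left(\frac{1+\sqrt{\alpha\beta}}{\sqrt{\alpha}+\sqrt{\beta}}\right)^2$ is nondecreasing in each variable on $[1,\infty)^2$. Consequently, if $A,B$ are $2\times2$ matrices with strictly positive entries, $\alpha,\beta\ge1$, $R(A)\le\alpha$ and $R(B)\le\beta$, then $R(AB)\le\Phi(\alpha,\beta)$.
   Context: For a $2\times2$ matrix $A=(a_{ij})$ with strictly positive entries, $F(A)=\frac{a_{11}a_{22}}{a_{12}a_{21}}$ and the distortion is $R(A)=\max\{F(A),1/F(A)\}$. *)

(* Defs.v *)
(* R is an arbitrary real closed field (contains the reals as a
   special case); 2x2 matrices are 'M[R]_2 with indices ord0 (=1st) and ord_max (=2nd). *)
From mathcomp Require Import all_boot all_order all_algebra.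
Set Implicit Arguments. Unset Strict Implicit. Unset Printing Implicit Defensive.
Import Order.TTheory GRing.Theory Num.Theory.
Local Open Scope ring_scope.

Section Defs.
Variable R : rcfType.

Definition posmx (A : 'M[R]_2) : Prop := forall i j, 0 < A i j.

Definition Fmx (A : 'M[R]_2) : R :=
  (A ord0 ord0 * A ord_max ord_max) / (A ord0 ord_max * A ord_max ord0).

Definition distortion (A : 'M[R]_2) : R := Num.max (Fmx A) (Fmx A)^-1.

Definition Phi (a b : R) : R :=
  ((1 + Num.sqrt (a * b)) / (Num.sqrt a + Num.sqrt b)) ^+ 2.
End Defs.

(* Main.v *)
Require Import Defs.
From mathcomp Require Import all_boot all_order all_algebra ring lra.
Import Order.TTheory GRing.Theory Num.Theory.
Local Open Scope ring_scope.

Lemma mulmx2E {R : rcfType} (A B : 'M[R]_2) i j :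
  (A *m B) i j = A i ord0 * B ord0 j + A i ord_max * B ord_max j.
Proof.
rewrite mxE big_ord_recr big_ord1 /=.
congr (_ * _ + _ * _); congr (_ _ _); apply/val_inj => //.
Qed.

Lemma key {R : rcfType} (S T x1 x2 y1 y2 m n : R) :
  1 <= S -> 1 <= T -> 0 < x1 -> 0 < x2 -> 0 < y1 -> 0 < y2 -> 0 <= m -> 0 <= n ->
  x1 <= S * x2 -> x2 <= S * x1 -> y1 <= T * y2 -> y2 <= T * y1 ->
  m * n = (x1 * x2 * y1 * y2) ^+ 2 ->
  (S + T) ^+ 2 * (m + n + x1^+2 * y1^+2 + x2^+2 * y2^+2) <=
  (1 + S * T) ^+ 2 * (m + n + x1^+2 * y2^+2 + x2^+2 * y1^+2).
Proof.
move=> S1 T1 x1p x2p y1p y2p m0 n0 h1 h2 h3 h4 hmn.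
set w := x1 * x2 * y1 * y2.
have w0 : 0 <= w by apply/ltW; rewrite /w !mulr_gt0.
have hw : 2 * w <= m + n.
  have : (2 * w) ^+ 2 <= (m + n) ^+ 2.
    have -> : (2 * w) ^+ 2 = 4 * (m * n) by rewrite hmn /w; ring.
    have : 0 <= (m - n) ^+ 2 by exact: sqr_ge0.
    lra.
  move=> h; rewrite -(@ler_pXn2r _ 2) // nnegrE; [lra|lra].
have MK : 0 <= (1 + S * T) ^+ 2 - (S + T) ^+ 2.
  have -> : (1 + S * T) ^+ 2 - (S + T) ^+ 2 = (S^+2 - 1) * (T^+2 - 1) by ring.
  by apply: mulr_ge0; nra.
have lin : (S + T) * (x1 * y1 + x2 * y2) <= (1 + S * T) * (x1 * y2 + x2 * y1).
  have -> : (1 + S * T) * (x1 * y2 + x2 * y1) = (S + T) * (x1 * y1 + x2 * y2)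
     + ((S * x2 - x1) * (T * y1 - y2) + (S * x1 - x2) * (T * y2 - y1)) by ring.
  rewrite lerDl; apply: addr_ge0; apply: mulr_ge0; rewrite subr_ge0 //.
have sq : ((S + T) * (x1 * y1 + x2 * y2)) ^+ 2 <= ((1 + S * T) * (x1 * y2 + x2 * y1)) ^+ 2.
  rewrite (@ler_pXn2r _ 2) // ?nnegrE.
  by apply: mulr_ge0; [nra| apply: addr_ge0; apply/ltW/mulr_gt0].
  by apply: mulr_ge0; [nra| apply: addr_ge0; apply/ltW/mulr_gt0].
have e1 : (1 + S * T) ^+ 2 * (m + n) >= (S + T) ^+ 2 * (m + n) + ((1 + S * T) ^+ 2 - (S + T) ^+ 2) * (2 * w).
  have : ((1 + S * T) ^+ 2 - (S + T) ^+ 2) * (2 * w) <= ((1 + S * T) ^+ 2 - (S + T) ^+ 2) * (m + n) by apply: ler_wpM2l.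
  lra.
rewrite /w in e1 sq.
lra.
Qed.

Lemma PhiE {R : rcfType} (a b : R) : 0 <= a ->
  Phi a b = (1 + Num.sqrt a * Num.sqrt b) ^+ 2 / (Num.sqrt a + Num.sqrt b) ^+ 2.
Proof. by move=> a0; rewrite /Phi sqrtrM // expr_div_n. Qed.

Lemma sqrt_ge1 {R : rcfType} {a : R} : 1 <= a -> 1 <= Num.sqrt a.
Proof. by move=> a1; rewrite -sqrtr1 ler_sqrt //; apply: le_trans a1. Qed.

Lemma mono1 {R : rcfType} (a a' b : R) :
  1 <= a -> a <= a' -> 1 <= b -> Phi a b <= Phi a' b.
Proof.
move=> a1 aa b1.
have a0 : 0 <= a by apply: le_trans a1.
have a'0 : 0 <= a' by apply: le_trans aa.
have b0 : 0 <= b by apply: le_trans b1.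
rewrite /Phi !sqrtrM //.
have s1 := sqrt_ge1 a1; have t1 := sqrt_ge1 b1.
have ss : Num.sqrt a <= Num.sqrt a' by rewrite ler_sqrt.
move: s1 t1 ss; set s := Num.sqrt a; set s' := Num.sqrt a'; set t := Num.sqrt b.
move=> s1 t1 ss.
have p1 : 0 < s + t by lra.
have p2 : 0 < s' + t by lra.
rewrite (@ler_pXn2r _ 2) // ?nnegrE; last first.
- by apply: divr_ge0; nra.
- by apply: divr_ge0; nra.
rewrite ler_pdivrMr // mulrAC ler_pdivlMr //.
have : 0 <= (s' - s) * (t * t - 1) by apply: mulr_ge0; nra.
lra.
Qed.

Lemma core {R : rcfType} (a11 a12 a21 a22 b11 b12 b21 b22 al be : R) :
  0 < a11 -> 0 < a12 -> 0 < a21 -> 0 < a22 ->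
  0 < b11 -> 0 < b12 -> 0 < b21 -> 0 < b22 -> 1 <= al -> 1 <= be ->
  a11 * a22 <= al * (a12 * a21) -> a12 * a21 <= al * (a11 * a22) ->
  b11 * b22 <= be * (b12 * b21) -> b12 * b21 <= be * (b11 * b22) ->
  (a11 * b11 + a12 * b21) * (a21 * b12 + a22 * b22) <=
  Phi al be * ((a11 * b12 + a12 * b22) * (a21 * b11 + a22 * b21)).
Proof.
move=> ? ? ? ? ? ? ? ? al1 be1 h1 h2 h3 h4.
have al0 : 0 <= al by apply: le_trans al1.
have be0 : 0 <= be by apply: le_trans be1.
rewrite PhiE //.
have S1 := sqrt_ge1 al1; have T1 := sqrt_ge1 be1.
have ps : forall x : R, 0 < x -> 0 < Num.sqrt x.
  by move=> x x0; rewrite sqrtr_gt0.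
have sq : forall x : R, 0 < x -> Num.sqrt x ^+ 2 = x by move=> x x0; rewrite sqr_sqrtr //; exact: ltW.
have hle : forall x y z : R, 0 < x -> 0 < y -> 0 <= z -> x <= z * y ->
   Num.sqrt x <= Num.sqrt z * Num.sqrt y.
  move=> x y z x0 y0 z0 h; rewrite -sqrtrM // ler_sqrt //; apply: mulr_ge0 => //; exact: ltW.
have hp : 0 < a11 * a22 by apply: mulr_gt0.
have hq : 0 < a12 * a21 by apply: mulr_gt0.
have hu : 0 < b11 * b22 by apply: mulr_gt0.
have hv : 0 < b12 * b21 by apply: mulr_gt0.
have m0 : 0 <= a11 * a21 * b11 * b12 by apply/ltW; rewrite !mulr_gt0.
have n0 : 0 <= a12 * a22 * b21 * b22 by apply/ltW; rewrite !mulr_gt0.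
have hmn : (a11 * a21 * b11 * b12) * (a12 * a22 * b21 * b22) =
   (Num.sqrt (a11 * a22) * Num.sqrt (a12 * a21) * Num.sqrt (b11 * b22) * Num.sqrt (b12 * b21)) ^+ 2.
  by rewrite !exprMn !sq //; ring.
have := key _ _ _ _ _ _ _ _ S1 T1 (ps _ hp) (ps _ hq) (ps _ hu) (ps _ hv) m0 n0
  (hle _ _ _ hp hq al0 h1) (hle _ _ _ hq hp al0 h2)
  (hle _ _ _ hu hv be0 h3) (hle _ _ _ hv hu be0 h4) hmn.
rewrite !sq // => H.
rewrite mulrAC ler_pdivlMr; last first.
  by apply: exprn_gt0; apply: ltr_wpDr; [apply: sqrtr_ge0| apply: ps; lra].
have E1 : (a11 * b11 + a12 * b21) * (a21 * b12 + a22 * b22) = a11 * a21 * b11 * b12 + a12 * a22 * b21 * b22 + a11 * a22 * (b11 * b22) + a12 * a21 * (b12 * b21) by ring.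
have E2 : (a11 * b12 + a12 * b22) * (a21 * b11 + a22 * b21) = a11 * a21 * b11 * b12 + a12 * a22 * b21 * b22 + a11 * a22 * (b12 * b21) + a12 * a21 * (b11 * b22) by ring.
rewrite E1 E2 mulrC.
exact: H.
Qed.

Lemma PhiC {R : rcfType} (a b : R) : Phi a b = Phi b a.
Proof. by rewrite /Phi (mulrC a b) (addrC (Num.sqrt a)). Qed.

Theorem mainTheorem2 (R : rcfType) :
  (forall a a' b : R, 1 <= a -> a <= a' -> 1 <= b -> Phi a b <= Phi a' b) /\
  (forall a b b' : R, 1 <= a -> 1 <= b -> b <= b' -> Phi a b <= Phi a b') /\
  (forall (A B : 'M[R]_2) (a b : R),
      posmx A -> posmx B -> 1 <= a -> 1 <= b ->
      distortion A <= a -> distortion B <= b ->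
      distortion (A *m B) <= Phi a b).
Proof.
split; first exact: mono1.
split.
  move=> a b b' a1 b1 bb; rewrite (PhiC a b) (PhiC a b'); exact: mono1.
move=> A B a b pA pB a1 b1 dA dB.
move: dA dB; rewrite /distortion !ge_max /Fmx !invf_div.
have pos := pA; have posB := pB.
rewrite !ler_pdivrMr; try by apply: mulr_gt0; rewrite ?mulmx2E; apply: addr_gt0; apply: mulr_gt0.
move=> /andP[h1 h2] /andP[h3 h4].
rewrite !mulmx2E.
apply/andP; split.
  by apply: core.
by apply: (@core R (A ord0 ord0) (A ord0 ord_max) (A ord_max ord0) (A ord_max ord_max) (B ord0 ord_max) (B ord0 ord0) (B ord_max ord_max) (B ord_max ord0) a b).
all: by apply: mulr_gt0; first [exact: pA|exact: pB].
Qed.
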